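(* Let $N\geq 1$, let $\alpha,\beta\in\mathbb{R}$, and let $a_1,\dots,a_N\in[0,2\pi)$. For each $i$ let $\Omega_i^*=\frac1N\sum_{j=1}^N\sin(a_i-a_j+\alpha)\sin(a_i-a_j+\beta)$. Consider the layer equation (the system at $\varepsilon=0$) \[ \dot\psi_i = -\Omega_i^*+\frac{1}{N}\sum_{j=1}^N\sin(a_i-a_j+\beta)\sin(\psi_i+a_i-\psi_j-a_j+\alpha)-\frac{1}{N}\sum_{j=1}^N\sigma_{ij}\sin(\psi_i+a_i-\psi_j-a_j+\alpha),\qquad \dot\sigma_{ij}=0, \] for $i,j=1,\ldots,N$, of the slow-fast system obtained by adding $\dot\sigma_{ij}=-\varepsilon\big(\sin(\psi_i+a_i-\psi_j-a_j+\beta)-\sin(a_i-a_j+\beta)+\sigma_{ij}\big)$. Then the equilibrium point $(\psi_i,\sigma_{ij})=(0,0)$ of the layer equation is non-hyperbolic. In particular, the antipodal solution, corresponding to $a_i\in\{0,\pi\}$ for all $i$, is nilpotent for $\beta=0$.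
   Context: This system arises from the adaptive Kuramoto network $\dot\phi_i=-\frac1N\sum_j\kappa_{ij}\sin(\phi_i-\phi_j+\alpha)$, $\dot\kappa_{ij}=-\varepsilon(\sin(\phi_i-\phi_j+\beta)+\kappa_{ij})$ via the co-rotating coordinates $\psi_i=\phi_i-(\Omega^*t+a_i)$ and shifted weights $\sigma_{ij}=\kappa_{ij}+\sin(a_i-a_j+\beta)$. An equilibrium is non-hyperbolic if its Jacobian has an eigenvalue with zero real part, and nilpotent if all eigenvalues of its Jacobian are zero. *)

(* Defs.v *)
From HB Require Import structures.
From mathcomp Require Import all_boot all_order all_algebra.
From mathcomp Require Import all_classical all_reals all_analysis.
From mathcomp Require Import complex.
Set Implicit Arguments. Unset Strict Implicit. Unset Printing Implicit Defensive.
Import Order.TTheory GRing.Theory Num.Theory.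
Local Open Scope ring_scope.

(* State vector of dimension N + N*N:
   index  lshift (N*N) i                    <-> psi_i
   index  rshift N (mxvec_index i j)        <-> sigma_ij            *)
Definition psi_of {R : realType} {N : nat} (x : 'rV[R]_(N + N * N)) (i : 'I_N) : R :=
  x ord0 (lshift (N * N) i).
Definition sigma_of {R : realType} {N : nat} (x : 'rV[R]_(N + N * N)) (i j : 'I_N) : R :=
  x ord0 (rshift N (mxvec_index i j)).

Definition Omega_star {R : realType} {N : nat} (alpha beta : R) (a : 'I_N -> R) (i : 'I_N) : R :=
  N%:R^-1 * \sum_(j < N) sin (a i - a j + alpha) * sin (a i - a j + beta).

Definition layer_psi {R : realType} {N : nat} (alpha beta : R) (a : 'I_N -> R)
  (x : 'rV[R]_(N + N * N)) (i : 'I_N) : R :=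
  - Omega_star alpha beta a i
  + N%:R^-1 * \sum_(j < N) sin (a i - a j + beta)
                 * sin (psi_of x i + a i - psi_of x j - a j + alpha)
  - N%:R^-1 * \sum_(j < N) sigma_of x i j
                 * sin (psi_of x i + a i - psi_of x j - a j + alpha).

Definition layer_field {R : realType} {N : nat} (alpha beta : R) (a : 'I_N -> R)
  (x : 'rV[R]_(N + N * N)) : 'rV[R]_(N + N * N) :=
  \row_(k < N + N * N)
     match fintype.split k with
     | inl i => layer_psi alpha beta a x i
     | inr _ => 0
     end.

Definition complex_eigenvalue {R : realType} {n : nat} (A : 'M[R]_n) (lam : R[i]) : Prop :=
  eigenvalue (map_mx (fun x : R => (x%:C)%C) A) lam.

Definition nonhyperbolic {R : realType} {n : nat} (A : 'M[R]_n) : Prop :=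
  exists lam : R[i], complex_eigenvalue A lam /\ complex.Re lam = 0.

(* nilpotent (in the paper's sense): all eigenvalues are zero *)
Definition all_eigenvalues_zero {R : realType} {n : nat} (A : 'M[R]_n) : Prop :=
  forall lam : R[i], complex_eigenvalue A lam -> lam = 0.

(* Main.v *)
Require Import Defs.
From HB Require Import structures.
From mathcomp Require Import all_boot all_order all_algebra.
From mathcomp Require Import all_classical all_reals all_analysis.
From mathcomp Require Import complex.
Import Order.TTheory GRing.Theory Num.Theory.
Local Open Scope ring_scope.

Module Helpers.
Import numFieldNormedType.Exports.
Local Open Scope classical_set_scope.
Lemma jac_entry0 (R : realType) n m (f : 'rV[R]_n -> 'rV[R]_m) i j :
  differentiable f 0 -> (forall h : R, f (h *: delta_mx 0 i) 0 j = 0) ->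
  jacobian f 0 i j = 0.
Proof.
move=> df hf.
rewrite /jacobian /lin1_mx mxE -deriveE //.
have dv : derivable f 0 (delta_mx 0 i) by exact: diff_derivable.
rewrite /derivable in dv.
rewrite /derive.
set g := (fun h : R => _).
pose l : R := (lim (g @ 0^')) 0 j.
pose p := (fun w : 'rV[R]_m => (w 0 j : R)).
have : (p \o g) @ 0^' --> l.
  apply: continuous_cvg => //. exact: coord_continuous.
move/cvg_lim => /= H; rewrite -/l -H //.
apply: lim_near_cst => //.
near=> h => /=.
rewrite /p /g /=.
have E1 : forall (c : R) (M : 'M[R]_(1,m)), (c *: M) 0 j = c * M 0 j by move=> c M; rewrite mxE.
have E2 : forall (A B : 'M[R]_(1,m)), (A - B) 0 j = A 0 j - B 0 j by move=> A B; rewrite !mxE.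
rewrite E1 E2 addr0.
apply: (etrans _ (mulr0 h^-1)); congr (_ * _).
apply: (etrans _ (subr0 0)); congr (_ - _); first exact: hf.
have := hf 0; rewrite scale0r; exact.
Unshelve. all: by end_near.
Qed.

Section D.
Variables (R : realType) (n : nat).
Notation V := 'rV[R]_n.

Lemma dD {W : normedModType R} (f g : V -> W) x : differentiable f x -> differentiable g x ->
  differentiable (fun y => f y + g y) x.
Proof. exact: differentiableD. Qed.
Lemma dB {W : normedModType R} (f g : V -> W) x : differentiable f x -> differentiable g x ->
  differentiable (fun y => f y - g y) x.
Proof. exact: differentiableB. Qed.
Lemma dN {W : normedModType R} (f : V -> W) x : differentiable f x ->
  differentiable (fun y => - f y) x.
Proof. exact: differentiableN. Qed.
Lemma dM (f g : V -> R) x : differentiable f x -> differentiable g x ->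
  differentiable (fun y => f y * g y) x.
Proof. exact: differentiableM. Qed.
Lemma dC {W : normedModType R} (c : W) x : differentiable (fun _ : V => c) x.
Proof. exact: (@differentiable_cst R V W c x). Qed.
Lemma dCR (c : R) (x : V) : differentiable (fun _ : V => c) x.
Proof. exact: dC. Qed.
Lemma dS {W : normedModType R} m (f : 'I_m -> V -> W) x :
  (forall i, differentiable (f i) x) -> differentiable (fun y => \sum_(i < m) f i y) x.
Proof.
move=> H; elim: m f H => [|m IH] f H.
  have -> : (fun y => \sum_(i < 0) f i y) = (fun _ => 0) by apply/funext => y; rewrite big_ord0.
  exact: dC.
have -> : (fun y => \sum_(i < m.+1) f i y) = (fun y => \sum_(i < m) f (widen_ord (leqnSn m) i) y + f ord_max y).
  by apply/funext => y; rewrite big_ord_recr.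
apply: dD; last exact: H.
exact: (IH (fun i => f (widen_ord (leqnSn m) i))).
Qed.
Lemma dsin (f : V -> R) x : differentiable f x -> differentiable (fun y => sin (f y)) x.
Proof.
move=> df; apply: (@differentiable_comp _ _ _ _ f sin) => //.
exact/derivable1_diffP/derivable_sin.
Qed.
Lemma dco k x : differentiable (fun y : V => y 0 k) x.
Proof. exact: differentiable_coord. Qed.
End D.

Lemma layer_psi_diff (R : realType) N alpha beta (a : 'I_N -> R) i x :
  differentiable (fun y => layer_psi alpha beta a y i) x.
Proof.
rewrite /layer_psi /psi_of /sigma_of.
apply: dB; [apply: dD; [exact: dC|]|].
- apply: dM; first exact: dC.
  apply: dS => j; apply: dM; first exact: dC.
  apply: dsin; apply: dD; first apply: dB; first apply: dB; first apply: dD.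
  all: try exact: dco. all: try exact: (@dCR R (N + N * N)).
- apply: dM; first exact: dC.
  apply: dS => j; apply: dM; first exact: dco.
  apply: dsin; apply: dD; first apply: dB; first apply: dB; first apply: dD.
  all: try exact: dco. all: try exact: (@dCR R (N + N * N)).
Qed.

Lemma layer_field_eq (R : realType) N alpha beta (a : 'I_N -> R) :
  layer_field alpha beta a =
  (fun x => \sum_(i < N) layer_psi alpha beta a x i *: (delta_mx 0 (lshift (N * N) i) : 'rV[R]_(N + N * N))).
Proof.
apply/funext => x; apply/rowP => k.
rewrite /layer_field mxE summxE.
case: splitP => [i Ei|l Ei].
  rewrite (bigD1 i) //= big1 ?addr0.
    rewrite !mxE eqxx /= (_ : k == lshift _ i = true) ?mulr1 //.
    by apply/eqP/val_inj.
  move=> j ji; rewrite !mxE /=; case: eqP => [E|_]; last by rewrite mulr0.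
  by move: Ei; rewrite E /= => /val_inj E'; rewrite E' eqxx in ji.
rewrite big1 // => j _; rewrite !mxE /=.
case: eqP => [E|_]; last by rewrite mulr0.
move: Ei; rewrite E /= => E'; have := ltn_ord j; by rewrite E' ltnNge leq_addr.
Qed.

Lemma layer_field_diff (R : realType) N alpha beta (a : 'I_N -> R) x :
  differentiable (layer_field alpha beta a) x.
Proof.
rewrite layer_field_eq; apply: dS => i.
exact/differentiableZl/layer_psi_diff.
Qed.

Lemma sin_diff0 (R : realType) (x y : R) : (x = 0 \/ x = pi) -> (y = 0 \/ y = pi) ->
  sin (x - y + 0) = 0.
Proof.
rewrite addr0 => [[]->[]->]; rewrite ?subrr ?sin0 ?subr0 ?sinpi //.
by rewrite sub0r sinN sinpi oppr0.
Qed.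

Lemma jac_sigma (R : realType) N alpha beta (a : 'I_N -> R) i l :
  jacobian (layer_field alpha beta a) 0 i (rshift N l) = 0.
Proof.
apply: jac_entry0; first exact: layer_field_diff.
by move=> h; rewrite /layer_field mxE (unsplitK (inr l)).
Qed.

Lemma jac_psi (R : realType) N alpha (a : 'I_N -> R) i i' :
  (forall i, a i = 0 \/ a i = pi) ->
  jacobian (layer_field alpha 0 a) 0 (lshift (N * N) i) (lshift (N * N) i') = 0.
Proof.
move=> ha.
apply: jac_entry0; first exact: layer_field_diff.
move=> h; rewrite /layer_field mxE (unsplitK (inl i')) /layer_psi /Omega_star.
rewrite big1; last by move=> j _; rewrite sin_diff0 ?mulr0.
rewrite [X in _ + _ * X]big1; last by move=> j _; rewrite sin_diff0 ?mul0r.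
rewrite [X in _ - _ * X]big1; last first.
  move=> j _; rewrite /sigma_of !mxE /=.
  case: eqP => [E|_]; last by rewrite ?andbF mulr0 mul0r.
  have := congr1 val E => /= E'; have := ltn_ord i; rewrite -E'.
  by rewrite ltnNge leq_addr.
by rewrite !mulr0 !oppr0 !addr0.
Qed.
End Helpers.
Import Helpers.

Theorem proposition4 (R : realType) (N : nat) (hN : (1 <= N)%N)
  (alpha beta : R) (a : 'I_N -> R)
  (ha : forall i, 0 <= a i < 2 * pi) :
  nonhyperbolic (jacobian (layer_field alpha beta a) 0)
  /\ ((beta = 0 /\ (forall i, a i = 0 \/ a i = pi)) ->
      all_eigenvalues_zero (jacobian (layer_field alpha beta a) 0)).
Proof.
split.
  exists 0; split; last by [].
  rewrite /complex_eigenvalue /eigenvalue /eigenspace.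
  rewrite (_ : (0 : R[i])%:M = 0); last by apply/matrixP => i j; rewrite !mxE mul0rn.
  rewrite subr0 kermx_eq0 row_free_unit unitmxE.
  pose i0 : 'I_N := Ordinal hN.
  rewrite (expand_det_col _ (rshift N (mxvec_index i0 i0))) big1 ?unitr0 //.
  by move=> i _; rewrite mxE jac_sigma mul0r.
move=> [b0 ha'] lam /eigenvalueP [v Hv vn0].
subst beta.
have J1 := @jac_sigma R N alpha 0 a.
have J2 := @jac_psi R N alpha a.
move: Hv J1 J2; set J := jacobian _ _; clearbody J => Hv J1 J2.
set C := map_mx _ _ in Hv.
have CC : C *m C = 0.
  apply/matrixP => i j; rewrite !mxE big1 // => k _; rewrite !mxE.
  rewrite -(fintype.splitK j); case: (fintype.split j) => j' /=; last by rewrite J1 mulr0.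
  rewrite -(fintype.splitK k); case: (fintype.split k) => k' /=.
    by rewrite J2 // mulr0.
  by rewrite J1 mul0r.
have : v *m C *m C = (lam ^+ 2) *: v by rewrite Hv -scalemxAl Hv scalerA.
rewrite -mulmxA CC mulmx0 => /esym/eqP.
by rewrite scaler_eq0 (negbTE vn0) orbF expf_eq0 /= => /eqP.
Qed.
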